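(* The UCB-LP and the Compact LP defined in the context have the same optimal objective value. Furthermore, the optimal values of the dual variables associated with the resource constraints (the constraints indexed by $k\in\mathcal K$) in the UCB-LP and in the Compact LP are the same.
   Context: Let $\mathcal N=\{1,\dots,N\}$ and $\mathcal K=\{1,\dots,K\}$. Data: $\hat v_i>0$, $r_i\in[0,1]$, $a(i,k)\in[0,1]$ for $i\in\mathcal N,k\in\mathcal K$, $c(k)>0$, $\omega\in[0,1)$, and $\varepsilon_i=\varepsilon(n_i)=(\sqrt N+1)\Psi/\sqrt{n_i}$ with positive integers $n_i$ and a constant $\Psi>0$. UCB-LP (variables $y(S)$, $S\subseteq\mathcal N$): maximize $\sum_{S\subseteq\mathcal N}\sum_{i\in S}r_i\Big(\frac{\hat v_i}{1+\sum_{j\in S}\hat v_j}+\varepsilon_i\Big)y(S)$ subject to $\sum_{S}\sum_{i\in S}a(i,k)\Big(\frac{\hat v_i}{1+\sum_{j\in S}\hat v_j}-\varepsilon_i\Big)y(S)\le(1-\omega)c(k)$ for all $k$, $\sum_S y(S)=1$, $y(S)\ge0$. Compact LP (variables $x_0\in\mathbb R$, $x\in\mathbb R_+^N$, $y\in\mathbb R_+^{N\times N}$): maximize $\sum_{i\in\mathcal N}r_i\big[(\hat v_i+\varepsilon_i)x_i+\varepsilon_i\sum_{j\in\mathcal N}\hat v_jy_{ij}\big]$ subject to $\sum_{i}a(i,k)\big[(\hat v_i-\varepsilon_i)x_i-\varepsilon_i\sum_j\hat v_jy_{ij}\big]\le(1-\omega)c(k)$ for all $k$; $x_0+\sum_i\hat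 v_ix_i=1$; $x_i\le x_0$ for all $i$; $y_{ij}\le\min\{x_i,x_j\}$ for all $i,j$. *)

(* Defs.v *)
(* an abstract real closed field R (needed for Num.sqrt). *)
From mathcomp Require Import all_boot all_order all_algebra.
Set Implicit Arguments. Unset Strict Implicit. Unset Printing Implicit Defensive.
Import Order.TTheory GRing.Theory Num.Theory.
Local Open Scope ring_scope.

Definition eps_of (R : rcfType) (N : nat) (Psi : R) (m : nat) : R :=
  (Num.sqrt (N%:R) + 1) * Psi / Num.sqrt (m%:R).

Definition Vsum (R : rcfType) (N : nat) (vh : 'I_N -> R) (S : {set 'I_N}) : R :=
  \sum_(j in S) vh j.

Definition ucb_obj (R : rcfType) (N : nat) (vh r eps : 'I_N -> R)
  (y : {set 'I_N} -> R) : R :=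
  \sum_(S : {set 'I_N}) \sum_(i in S) r i * (vh i / (1 + Vsum vh S) + eps i) * y S.

Definition ucb_res_coef (R : rcfType) (N K : nat) (vh eps : 'I_N -> R)
  (a : 'I_N -> 'I_K -> R) (k : 'I_K) (S : {set 'I_N}) : R :=
  \sum_(i in S) a i k * (vh i / (1 + Vsum vh S) - eps i).

Definition ucb_obj_coef (R : rcfType) (N : nat) (vh r eps : 'I_N -> R)
  (S : {set 'I_N}) : R :=
  \sum_(i in S) r i * (vh i / (1 + Vsum vh S) + eps i).

Definition ucb_feasible (R : rcfType) (N K : nat) (vh eps : 'I_N -> R)
  (a : 'I_N -> 'I_K -> R) (c : 'I_K -> R) (om : R) (y : {set 'I_N} -> R) : Prop :=
  (forall k : 'I_K,
     \sum_(S : {set 'I_N}) \sum_(i in S) a i k * (vh i / (1 + Vsum vh S) - eps i) * y S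
       <= (1 - om) * c k)
  /\ \sum_(S : {set 'I_N}) y S = 1
  /\ (forall S, 0 <= y S).

Definition ucb_opt_value (R : rcfType) (N K : nat) (vh r eps : 'I_N -> R)
  (a : 'I_N -> 'I_K -> R) (c : 'I_K -> R) (om : R) (v : R) : Prop :=
  (exists y, ucb_feasible vh eps a c om y /\ ucb_obj vh r eps y = v)
  /\ (forall y, ucb_feasible vh eps a c om y -> ucb_obj vh r eps y <= v).

Definition cmp_obj (R : rcfType) (N : nat) (vh r eps : 'I_N -> R)
  (x0 : R) (x : 'I_N -> R) (y : 'I_N -> 'I_N -> R) : R :=
  \sum_(i < N) r i * ((vh i + eps i) * x i + eps i * \sum_(j < N) vh j * y i j).

Definition cmp_feasible (R : rcfType) (N K : nat) (vh eps : 'I_N -> R)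
  (a : 'I_N -> 'I_K -> R) (c : 'I_K -> R) (om : R)
  (x0 : R) (x : 'I_N -> R) (y : 'I_N -> 'I_N -> R) : Prop :=
  (forall i, 0 <= x i)
  /\ (forall i j, 0 <= y i j)
  /\ (forall k : 'I_K,
        \sum_(i < N) a i k * ((vh i - eps i) * x i - eps i * \sum_(j < N) vh j * y i j)
          <= (1 - om) * c k)
  /\ x0 + \sum_(i < N) vh i * x i = 1
  /\ (forall i, x i <= x0)
  /\ (forall i j, y i j <= Num.min (x i) (x j)).

Definition cmp_opt_value (R : rcfType) (N K : nat) (vh r eps : 'I_N -> R)
  (a : 'I_N -> 'I_K -> R) (c : 'I_K -> R) (om : R) (v : R) : Prop :=
  (exists x0 x y, cmp_feasible vh eps a c om x0 x y /\ cmp_obj vh r eps x0 x y = v)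
  /\ (forall x0 x y, cmp_feasible vh eps a c om x0 x y -> cmp_obj vh r eps x0 x y <= v).

(* ---------------- Dual of the UCB-LP ----------------
   lam k >= 0 : dual of the k-th resource constraint;
   mu (free)  : dual of sum_S y(S) = 1. *)
Definition ucb_dual_obj (R : rcfType) (K : nat) (c : 'I_K -> R) (om : R)
  (lam : 'I_K -> R) (mu : R) : R :=
  \sum_(k < K) lam k * ((1 - om) * c k) + mu.

Definition ucb_dual_feasible (R : rcfType) (N K : nat) (vh r eps : 'I_N -> R)
  (a : 'I_N -> 'I_K -> R) (lam : 'I_K -> R) (mu : R) : Prop :=
  (forall k, 0 <= lam k)
  /\ (forall S : {set 'I_N},
        \sum_(k < K) lam k * ucb_res_coef vh eps a k S + mu >= ucb_obj_coef vh r eps S).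

Definition ucb_dual_optimal (R : rcfType) (N K : nat) (vh r eps : 'I_N -> R)
  (a : 'I_N -> 'I_K -> R) (c : 'I_K -> R) (om : R) (lam : 'I_K -> R) (mu : R) : Prop :=
  ucb_dual_feasible vh r eps a lam mu
  /\ (forall lam' mu', ucb_dual_feasible vh r eps a lam' mu' ->
        ucb_dual_obj c om lam mu <= ucb_dual_obj c om lam' mu').

(* ---------------- Dual of the Compact LP ----------------
   lam k >= 0   : resource constraint k;
   mu (free)    : x0 + sum_i vh_i x_i = 1;
   al i >= 0    : x_i <= x0;
   be i j >= 0  : y_ij <= x_i;   ga i j >= 0 : y_ij <= x_j
   (the constraint y_ij <= min{x_i,x_j} written as these two linear constraints).
   Dual constraints come from the columns x0 (free), x_i >= 0, y_ij >= 0. *)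
Definition cmp_dual_obj (R : rcfType) (K : nat) (c : 'I_K -> R) (om : R)
  (lam : 'I_K -> R) (mu : R) : R :=
  \sum_(k < K) lam k * ((1 - om) * c k) + mu.

Definition cmp_dual_feasible (R : rcfType) (N K : nat) (vh r eps : 'I_N -> R)
  (a : 'I_N -> 'I_K -> R) (lam : 'I_K -> R) (mu : R) (al : 'I_N -> R)
  (be ga : 'I_N -> 'I_N -> R) : Prop :=
  (forall k, 0 <= lam k)
  /\ (forall i, 0 <= al i)
  /\ (forall i j, 0 <= be i j)
  /\ (forall i j, 0 <= ga i j)
  /\ mu - \sum_(i < N) al i = 0
  /\ (forall i : 'I_N,
        \sum_(k < K) lam k * (a i k * (vh i - eps i)) + mu * vh i + al i
          - \sum_(j < N) be i j - \sum_(j < N) ga j i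
        >= r i * (vh i + eps i))
  /\ (forall i j : 'I_N,
        - \sum_(k < K) lam k * (a i k * (eps i * vh j)) + be i j + ga i j
        >= r i * (eps i * vh j)).

Definition cmp_dual_optimal (R : rcfType) (N K : nat) (vh r eps : 'I_N -> R)
  (a : 'I_N -> 'I_K -> R) (c : 'I_K -> R) (om : R) (lam : 'I_K -> R) (mu : R)
  (al : 'I_N -> R) (be ga : 'I_N -> 'I_N -> R) : Prop :=
  cmp_dual_feasible vh r eps a lam mu al be ga
  /\ (forall lam' mu' al' be' ga', cmp_dual_feasible vh r eps a lam' mu' al' be' ga' ->
        cmp_dual_obj c om lam mu <= cmp_dual_obj c om lam' mu').

(* Main.v *)
Require Import Defs.
From mathcomp Require Import all_boot all_order all_algebra.
From mathcomp Require Import ring lra.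
From Stdlib Require Import List.
From Stdlib Require Import Classical_Prop.
Set Implicit Arguments. Unset Strict Implicit. Unset Printing Implicit Defensive.
Import Order.TTheory GRing.Theory Num.Theory.
Local Open Scope ring_scope.

Lemma memIn (X : eqType) (s : list X) x : x \in s -> In x s.
Proof. by elim: s => //= y s IH; rewrite seq.in_cons => /orP [/eqP ->|/IH]; [left|right]. Qed.

Section FM.
Variable R : realFieldType.
Variables (T C : finType) (A : C -> T -> R) (B : C -> R).

Definition ra (l : C -> R) (i : T) := \sum_c l c * A c i.
Definition rb (l : C -> R) := \sum_c l c * B c.
Definition lhs (D : {set T}) l (x : T -> R) := \sum_(i in D) ra l i * x i.
Definition sat D (s : list (C -> R)) x := forall l, In l s -> lhs D l x <= rb l.
Definition comb t p q : C -> R := fun c => (- ra q t) * p c + ra p t * q c.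
Definition upd (x : T -> R) t u := fun i => if i == t then u else x i.

Lemma ra_comb t p q i : ra (comb t p q) i = - ra q t * ra p i + ra p t * ra q i.
Proof.
rewrite /comb; set aq := ra q t; set ap := ra p t.
rewrite /ra !mulr_sumr -big_split /=; apply: eq_bigr => c _; ring.
Qed.

Lemma rb_comb t p q : rb (comb t p q) = - ra q t * rb p + ra p t * rb q.
Proof.
rewrite /comb; set aq := ra q t; set ap := ra p t.
rewrite /rb !mulr_sumr -big_split /=; apply: eq_bigr => c _; ring.
Qed.

Lemma lhs_comb D t p q x :
  lhs D (comb t p q) x = - ra q t * lhs D p x + ra p t * lhs D q x.
Proof.
set aq := ra q t; set ap := ra p t.
rewrite /lhs !mulr_sumr -big_split /=; apply: eq_bigr => i _; rewrite ra_comb -/aq -/ap; ring.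
Qed.

Lemma lhs_split (D : {set T}) t l x : t \in D -> lhs D l x = ra l t * x t + lhs (D :\ t) l x.
Proof. by move=> tD; rewrite /lhs (big_setD1 t tD). Qed.

Lemma lhs_upd (D : {set T}) t u l x : t \notin D -> lhs D l (upd x t u) = lhs D l x.
Proof.
move=> tD; apply: eq_bigr => i iD; rewrite /upd; case: eqP => // it.
by move: iD tD; rewrite it => ->.
Qed.

Lemma lhs_congr (D : {set T}) l x y : (forall i, i \in D -> x i = y i) -> lhs D l x = lhs D l y.
Proof. by move=> h; apply: eq_bigr => i iD; rewrite h. Qed.

Lemma sat_congr (D : {set T}) s x y : (forall i, i \in D -> x i = y i) -> sat D s x -> sat D s y.
Proof. by move=> h hs l ls; rewrite -(lhs_congr l h); apply: hs. Qed.

Definition fm t s :=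
  filter (fun l => ra l t == 0) s ++
  flat_map (fun p => map (fun q => comb t p q) (filter (fun q => ra q t < 0) s))
           (filter (fun p => 0 < ra p t) s).

Lemma in_fm t s l : In l (fm t s) ->
  (In l s /\ ra l t = 0) \/
  exists p q, [/\ In p s, In q s, 0 < ra p t, ra q t < 0 & l = comb t p q].
Proof.
rewrite /fm in_app_iff; case=> [|].
  by rewrite filter_In => -[ls /eqP h]; left.
rewrite in_flat_map => -[p [] /filter_In [ps pp]] /in_map_iff [q [<- /filter_In [qs qn]]].
by right; exists p, q.
Qed.

Lemma fm_sound (D : {set T}) t s x : t \in D -> sat D s x -> sat (D :\ t) (fm t s) x.
Proof.
move=> tD hs l /in_fm [[ls l0]|[p [q [ps qs pp qn ->]]]].
  by have := hs l ls; rewrite (lhs_split _ _ tD) l0 mul0r add0r.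
rewrite lhs_comb rb_comb.
have := hs p ps; have := hs q qs; rewrite !(lhs_split _ _ tD).
set ap := ra p t; set aq := ra q t; set Lp := lhs _ p x; set Lq := lhs _ q x.
move: pp qn; rewrite -/ap -/aq => pp qn h1 h2.
nra.
Qed.

Lemma sep (Ls Us : list R) :
  (forall l u, In l Ls -> In u Us -> l <= u) ->
  exists t, (forall l, In l Ls -> l <= t) /\ (forall u, In u Us -> t <= u).
Proof.
elim: Ls => [|l Ls IH] h.
  elim: Us {h} => [|u Us [t [_ ht]]]; first by exists 0.
  exists (Num.min u t); split=> // u' /= [<-|]; first by rewrite ge_min lexx.
  by move/ht => h; rewrite ge_min h orbT.
have [t [h1 h2]] : exists t, (forall l, In l Ls -> l <= t) /\ (forall u, In u Us -> t <= u).
  by apply: IH => l' u ?; apply: h; right.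
exists (Num.max l t); split.
  by move=> l' /= [<-|/h1 hl]; rewrite le_max ?lexx // hl orbT.
by move=> u hu; rewrite ge_max h2 // andbT; apply: h => //; left.
Qed.

Lemma fm_complete (D : {set T}) t s x : t \in D -> sat (D :\ t) (fm t s) x ->
  exists u, sat D s (upd x t u).
Proof.
move=> tD hs.
pose L l := lhs (D :\ t) l x.
pose bnd l := (rb l - L l) / ra l t.
have hsep : forall l' u', In l' (map bnd (filter (fun q => ra q t < 0) s)) ->
                     In u' (map bnd (filter (fun p => 0 < ra p t) s)) -> l' <= u'.
  move=> l' u' /in_map_iff [q [<- /filter_In [qs qn]]] /in_map_iff [p [<- /filter_In [ps pp]]].
  have : In (comb t p q) (fm t s).
    rewrite /fm in_app_iff; right; rewrite in_flat_map; exists p; split.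
      by rewrite filter_In.
    by rewrite in_map_iff; exists q; rewrite filter_In.
  move/hs; rewrite lhs_comb rb_comb -/(L p) -/(L q) /bnd => h.
  rewrite ler_pdivlMr // mulrAC ler_ndivrMr //.
  move: h pp qn; set ap := ra p t; set aq := ra q t => h pp qn; nra.
have [u [hl hu]] := sep hsep.
exists u => l ls.
have tD' : t \notin D :\ t by rewrite !inE eqxx.
rewrite (lhs_split _ _ tD) lhs_upd // /upd eqxx -/(L l).
case: (ltrgtP (ra l t) 0) => hlt.
- have := hl (bnd l); rewrite /bnd ler_ndivrMr // => h.
  by rewrite -lerBrDr mulrC h // in_map_iff; exists l; rewrite filter_In.
- have := hu (bnd l); rewrite /bnd ler_pdivlMr // => h.
  by rewrite -lerBrDr mulrC h // in_map_iff; exists l; rewrite filter_In.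
- have : In l (fm t s) by rewrite /fm in_app_iff; left; rewrite filter_In hlt eqxx.
  by move/hs; rewrite hlt mul0r add0r.
Qed.


Definition nonneg (l : C -> R) := forall c, 0 <= l c.

Lemma proj k : forall (D E : {set T}) s, E \subset D -> #|D :\: E| = k ->
  (forall l, In l s -> nonneg l) ->
  (forall l, In l s -> forall i, i \notin D -> ra l i = 0) ->
  exists s', (forall x, sat E s' x <-> exists y, (forall i, i \in E -> y i = x i) /\ sat D s y)
    /\ (forall l, In l s' -> nonneg l)
    /\ (forall l, In l s' -> forall i, i \notin E -> ra l i = 0).
Proof.
elim: k => [|k IH] D E s sED hk hn hz.
  have DE : D = E.
    apply/eqP; rewrite eqEsubset sED andbT -setD_eq0 -cards_eq0; exact/eqP.
  subst D; exists s; split => // x; split.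
    by move=> h; exists x.
  by case=> y [hy hs]; apply: sat_congr hs.
have [t tDE] : exists t, t \in D :\: E.
  by apply/set0Pn; rewrite -cards_eq0 hk.
have tD : t \in D by move: tDE; rewrite inE => /andP[].
have tE : t \notin E by move: tDE; rewrite inE => /andP[].
have sED' : E \subset D :\ t.
  apply/subsetP => i iE; rewrite !inE (subsetP sED) // andbT.
  by apply/eqP => it; rewrite -it iE in tE.
have hk' : #|(D :\ t) :\: E| = k.
  have : #|D :\: E| = ((t \in D :\: E) + #|(D :\: E) :\ t|)%N by apply: cardsD1.
  rewrite hk tDE add1n => -[->]; apply: eq_card => i; rewrite !inE.
  by case: (i == t); case: (i \in E); case: (i \in D).
have hn' : forall l, In l (fm t s) -> nonneg l.
  move=> l /in_fm [[ls _]|[p [q [ps qs pp qn ->]]]]; first exact: hn.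
  move=> c; rewrite /comb; have := hn p ps c; have := hn q qs c => h1 h2.
  apply: addr_ge0; apply: mulr_ge0 => //; rewrite ?oppr_ge0 ltW //.
have hz' : forall l, In l (fm t s) -> forall i, i \notin D :\ t -> ra l i = 0.
  move=> l /in_fm [[ls l0]|[p [q [ps qs pp qn ->]]]] i; rewrite !inE negb_and negbK.
    by case/orP => [/eqP ->|iD] //; apply: hz.
  rewrite ra_comb; case/orP => [/eqP ->|iD]; first by ring.
  by rewrite (hz p ps i iD) (hz q qs i iD); ring.
have [s' [h1 [h2 h3]]] := IH (D :\ t) E (fm t s) sED' hk' hn' hz'.
exists s'; split => // x; rewrite h1; split.
  case=> y [hy /(fm_complete tD)] [u hu]; exists (upd y t u); split => //.
  by move=> i iE; rewrite /upd; case: eqP => [it|_]; [rewrite -it iE in tE | apply: hy].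
by case=> y [hy hs]; exists y; split => //; apply: fm_sound.
Qed.

Definition delta (c : C) : C -> R := fun c' => (c' == c)%:R.

Lemma sum_delta (c : C) (F : C -> R) : \sum_c' delta c c' * F c' = F c.
Proof.
rewrite (bigD1 c) //= /delta eqxx mul1r big1 ?addr0 // => c' /negbTE ->.
by rewrite mul0r.
Qed.

Definition s0 := map delta (enum C).

Lemma sat_s0 D x : sat D s0 x <-> forall c, \sum_(i in D) A c i * x i <= B c.
Proof.
split.
  move=> h c; have := h (delta c); rewrite /lhs /rb sum_delta.
  have -> : \sum_(i in D) ra (delta c) i * x i = \sum_(i in D) A c i * x i.
    by apply: eq_bigr => i _; rewrite /ra sum_delta.
  apply; rewrite in_map_iff; exists c; split => //; apply: memIn; by rewrite enumT mem_index_enum.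
move=> h l /in_map_iff [c [<- _]]; rewrite /lhs /rb sum_delta.
have -> : \sum_(i in D) ra (delta c) i * x i = \sum_(i in D) A c i * x i.
  by apply: eq_bigr => i _; rewrite /ra sum_delta.
exact: h.
Qed.

Lemma s0_nonneg l : In l s0 -> nonneg l.
Proof. by case/in_map_iff => c [<- _] c'; rewrite /delta ler0n. Qed.


End FM.


Lemma list_dec (R : realFieldType) (X : Type) (f : X -> R) (s : list X) :
  (forall l, In l s -> 0 <= f l) \/ exists l, In l s /\ f l < 0.
Proof.
elim: s => [|y s [IH|[l [ls hl]]]]; first by left.
- case: (lerP 0 (f y)) => hy.
    by left => l /= [<-|/IH].
  by right; exists y; split => //; left.
- by right; exists l; split => //; right.
Qed.

Lemma sum_setT (R : realFieldType) (T : finType) (F : T -> R) :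
  \sum_(i in [set: T]) F i = \sum_i F i.
Proof. by apply: eq_bigl => i; rewrite in_setT. Qed.

Lemma farkas (R : realFieldType) (T C : finType) (A : C -> T -> R) (B : C -> R) :
  (forall x : T -> R, ~ (forall c, \sum_i A c i * x i <= B c)) ->
  exists l : C -> R, (forall c, 0 <= l c) /\ (forall i, \sum_c l c * A c i = 0)
                     /\ \sum_c l c * B c < 0.
Proof.
move=> hinf.
have hz : forall l, In l (s0 R C) -> forall i, i \notin [set: T] -> ra A l i = 0.
  by move=> l _ i; rewrite in_setT.
have [s' [h1 [h2 h3]]] := @proj R T C A B _ [set: T] set0 (s0 R C) (sub0set _) erefl
   (@s0_nonneg R C) hz.
have : ~ sat A B set0 s' (fun _ => 0).
  move/h1 => -[y [_ hy]]; apply: (hinf y) => c.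
  by move: hy; rewrite sat_s0 => /(_ c); rewrite sum_setT.
case: (list_dec (rb B) s') => [hall|[l [ls hl]]].
  by case => l /hall; rewrite /lhs big_set0.
exists l; split; first exact: h2.
split => [i|//]; apply: (h3 l ls i); by rewrite inE.
Qed.

Lemma max1 (R : realFieldType) (X : Type) (al be : X -> R) (s : list X) (t0 : R) :
  (forall l, In l s -> al l * t0 <= be l) ->
  (exists ts, (forall l, In l s -> al l * ts <= be l) /\
      forall t, (forall l, In l s -> al l * t <= be l) -> t <= ts)
  \/ (forall t, t0 <= t -> forall l, In l s -> al l * t <= be l).
Proof.
elim: s => [|y s IH] h0; first by right.
have h0s : forall l, In l s -> al l * t0 <= be l by move=> l ls; apply: h0; right.
have hy0 : al y * t0 <= be y by apply: h0; left.
have [[ts [hts hmax]]|hunb] := IH h0s.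
  have t0ts : t0 <= ts by apply: hmax.
  case: (lerP (al y) 0) => hay.
    left; exists ts; split.
      move=> l /= [<-|/hts //]; apply: le_trans hy0; rewrite ler_wnM2l //.
    by move=> t ht; apply: hmax => l ls; apply: ht; right.
  left; exists (Num.min ts (be y / al y)); split.
    move=> l /= [<-|ls].
      by rewrite -ler_pdivlMl // mulrC ge_min lexx orbT.
    case: (lerP 0 (al l)) => hal.
      by apply: le_trans (hts l ls); apply: ler_wpM2l => //; rewrite ge_min lexx.
    apply: le_trans (h0s l ls); apply: ler_wnM2l; first exact: ltW.
    rewrite le_min t0ts /= ler_pdivlMr // mulrC //.
  move=> t ht; rewrite le_min hmax /=; last by move=> l ls; apply: ht; right.
  by rewrite ler_pdivlMr // mulrC; apply: ht; left.
case: (lerP (al y) 0) => hay.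
  right => t ht l /= [<-|ls]; last exact: hunb.
  apply: le_trans hy0; rewrite ler_wnM2l //.
left; exists (be y / al y).
have t0u : t0 <= be y / al y by rewrite ler_pdivlMr // mulrC.
split.
  move=> l /= [<-|ls]; first by rewrite mulrC divfK // gt_eqF.
  exact: hunb.
by move=> t ht; rewrite ler_pdivlMr // mulrC; apply: ht; left.
Qed.

Section LP.
Variables (R : realFieldType) (T C : finType) (A : C -> T -> R) (B : C -> R) (cobj : T -> R).
Definition feas (x : T -> R) := forall c, \sum_i A c i * x i <= B c.
Definition obj (x : T -> R) := \sum_i cobj i * x i.

Definition A' (c : (unit + C)%type) (i : (unit + T)%type) : R :=
  match c, i with
  | inl _, inl _ => 1 | inl _, inr j => - cobj j
  | inr _, inl _ => 0 | inr c, inr j => A c j end.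
Definition B' (c : (unit + C)%type) : R := match c with inl _ => 0 | inr c => B c end.

Lemma sum_unit (F : unit -> R) : \sum_i F i = F tt.
Proof. by rewrite (big_pred1 tt) // => -[]. Qed.

Lemma feas'E (y : (unit + T)%type -> R) :
  (forall c, \sum_(i in [set: (unit + T)%type]) A' c i * y i <= B' c) <->
  feas (fun j => y (inr j)) /\ y (inl tt) <= obj (fun j => y (inr j)).
Proof.
have E c : \sum_(i in [set: (unit + T)%type]) A' c i * y i =
    A' c (inl tt) * y (inl tt) + \sum_j A' c (inr j) * y (inr j).
  by rewrite sum_setT big_sumType /= sum_unit.
split.
  move=> h; split.
    by move=> c; have := h (inr c); rewrite E /= mul0r add0r.
  have := h (inl tt); rewrite E /= mul1r /obj.
  rewrite (eq_bigr (fun j => - (cobj j * y (inr j)))) ?sumrN; last by move=> j _; rewrite mulNr.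
  by rewrite subr_le0.
case=> hf ho [[]|c]; rewrite E /=.
  rewrite mul1r (eq_bigr (fun j => - (cobj j * y (inr j)))) ?sumrN; last by move=> j _; rewrite mulNr.
  by rewrite subr_le0.
by rewrite mul0r add0r; apply: hf.
Qed.

Lemma lp_attain : (exists x, feas x) -> (exists M, forall x, feas x -> obj x <= M) ->
  exists x, feas x /\ forall y, feas y -> obj y <= obj x.
Proof.
move=> [x0 hx0] [M hM].
pose E : {set (unit + T)%type} := [set inl tt].
have hz : forall l, In l (s0 R (unit + C)%type) ->
   forall i, i \notin [set: (unit + T)%type] -> ra A' l i = 0.
  by move=> l _ i; rewrite in_setT.
have [s' [h1 [_ _]]] := @proj R _ _ A' B' _ [set: (unit + T)%type] E (s0 R _)
   (subsetT _) erefl (@s0_nonneg R _) hz.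
pose Q t := exists x, feas x /\ t <= obj x.
have PQ : forall t, (forall l, In l s' -> ra A' l (inl tt) * t <= rb B' l) <-> Q t.
  move=> t.
  have -> : (forall l, In l s' -> ra A' l (inl tt) * t <= rb B' l) <->
             sat A' B' E s' (fun _ => t).
    by split => h l ls; move: (h l ls); rewrite /lhs big_set1.
  rewrite h1; split.
    case=> y [hy]; rewrite sat_s0 feas'E => -[hf ho]; exists (fun j => y (inr j)).
    by split => //; rewrite -(hy (inl tt)) ?inE.
  case=> x [hf ho]; exists (fun i => match i with inl _ => t | inr j => x j end).
  split; first by move=> i; rewrite inE => /eqP ->.
  by rewrite sat_s0 feas'E.
have Qt0 : Q (obj x0) by exists x0; split.
have [[ts [hts hmax]]|hunb] := max1 (proj2 (PQ (obj x0)) Qt0).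
  have [x [hx hxts]] := proj1 (PQ ts) hts.
  exists x; split => // y hy; apply: le_trans hxts; apply: hmax; apply/PQ.
  by exists y; split.
have : Q (Num.max (obj x0) (M + 1)).
  by apply/PQ; apply: hunb; rewrite le_max lexx.
case=> x [hx]; rewrite ge_max => /andP [_ h].
have := le_trans h (hM x hx); move=> h'; lra.
Qed.
End LP.

Lemma farkas_nn (R : realFieldType) (T C : finType) (A : C -> T -> R) (B : C -> R) :
  (forall x : T -> R, (forall t, 0 <= x t) -> ~ (forall c, \sum_i A c i * x i <= B c)) ->
  exists l : C -> R, (forall c, 0 <= l c) /\ (forall t, 0 <= \sum_c l c * A c t)
                     /\ \sum_c l c * B c < 0.
Proof.
move=> hinf.
pose A2 (c : (C + T)%type) (t : T) : R :=
  match c with inl c => A c t | inr t' => - (t == t')%:R end.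
pose B2 (c : (C + T)%type) : R := match c with inl c => B c | inr _ => 0 end.
have hsum : forall (F : T -> R) t', \sum_t - (t == t')%:R * F t = - F t'.
  move=> F t'; rewrite (bigD1 t') //= eqxx mulN1r big1 ?addr0 // => t /negbTE ->.
  by rewrite oppr0 mul0r.
have [l [hl [hc hb]]] : exists l : (C + T)%type -> R, (forall c, 0 <= l c) /\
   (forall i, \sum_c l c * A2 c i = 0) /\ \sum_c l c * B2 c < 0.
  apply: farkas => x hx; apply: (hinf x).
    by move=> t; have := hx (inr t); rewrite /= hsum oppr_le0.
  by move=> c; move: (hx (inl c)).
exists (fun c => l (inl c)); split; first by move=> c; apply: hl.
split.
  move=> t; have := hc t; rewrite big_sumType /=.
  have -> : \sum_(t' : T) l (inr t') * - (t == t')%:R = - l (inr t).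
    rewrite (bigD1 t) //= eqxx mulrN1 big1 ?addr0 // => t' /negbTE.
    by rewrite eq_sym => ->; rewrite oppr0 mulr0.
  by move/eqP; rewrite subr_eq0 => /eqP ->; apply: hl.
have h0 : \sum_(t : T) l (inr t) * B2 (inr t) = 0 by apply: big1 => t _; rewrite mulr0.
by move: hb; rewrite big_sumType h0 Monoid.mulm1.
Qed.

Section Bridge.
Variables (R : rcfType) (N : nat) (vh : 'I_N -> R).
Hypothesis hvh : forall i, 0 < vh i.

Lemma sum_in_ind (F : 'I_N -> R) (S : {set 'I_N}) :
  \sum_(i in S) F i = \sum_i (i \in S)%:R * F i.
Proof.
by rewrite big_mkcond; apply: eq_bigr => i _; case: (i \in S); rewrite ?mul1r ?mul0r.
Qed.

Lemma V_ge0 S : 0 <= Vsum vh S.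
Proof. by apply: sumr_ge0 => i _; apply: ltW. Qed.

Lemma V1_gt0 S : 0 < 1 + Vsum vh S.
Proof. by apply: ltr_pwDl => //; apply: V_ge0. Qed.

Lemma V1_neq0 S : 1 + Vsum vh S != 0.
Proof. by rewrite gt_eqF // V1_gt0. Qed.

Definition X0s (w : {set 'I_N} -> R) := \sum_(S : {set 'I_N}) w S.
Definition Xs (w : {set 'I_N} -> R) (i : 'I_N) := \sum_(S : {set 'I_N}) (i \in S)%:R * w S.
Definition Ys (w : {set 'I_N} -> R) (i j : 'I_N) :=
  \sum_(S : {set 'I_N}) (i \in S)%:R * (j \in S)%:R * w S.

Lemma bridge (g h : 'I_N -> R) (w y : {set 'I_N} -> R)
  (hy : forall S, y S = w S * (1 + Vsum vh S)) :
  \sum_(S : {set 'I_N}) \sum_(i in S) g i * (vh i / (1 + Vsum vh S) + h i) * y S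
  = \sum_(i : 'I_N) g i * ((vh i + h i) * Xs w i + h i * \sum_j vh j * Ys w i j).
Proof.
transitivity (\sum_(S : {set 'I_N}) \sum_(i : 'I_N) ((i \in S)%:R * (g i * (vh i + h i)) * w S
     + \sum_(j : 'I_N) (i \in S)%:R * (j \in S)%:R * (g i * h i * vh j) * w S)).
  apply: eq_bigr => S _; rewrite sum_in_ind; apply: eq_bigr => i _.
  rewrite hy.
  have -> : \sum_(j : 'I_N) (i \in S)%:R * (j \in S)%:R * (g i * h i * vh j) * w S
      = (i \in S)%:R * (g i * h i * w S) * Vsum vh S.
    rewrite /Vsum sum_in_ind mulr_sumr; apply: eq_bigr => j _; ring.
  have := V1_neq0 S; set V := Vsum vh S => hV.
  field; exact: hV.
rewrite exchange_big /=; apply: eq_bigr => i _.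
rewrite big_split /= /Xs /Ys.
rewrite [RHS]mulrDr; congr (_ + _).
  by rewrite !mulr_sumr; apply: eq_bigr => S _; ring.
rewrite exchange_big /= !mulr_sumr; apply: eq_bigr => j _.
rewrite !mulr_sumr; apply: eq_bigr => S _; ring.
Qed.

Lemma sum_y (w y : {set 'I_N} -> R) (hy : forall S, y S = w S * (1 + Vsum vh S)) :
  \sum_(S : {set 'I_N}) y S = X0s w + \sum_i vh i * Xs w i.
Proof.
rewrite /X0s /Xs.
under eq_bigr => S _ do rewrite hy mulrDr mulr1 /Vsum sum_in_ind mulr_sumr.
rewrite big_split /=; congr (_ + _).
rewrite exchange_big /=; apply: eq_bigr => i _; rewrite mulr_sumr.
by apply: eq_bigr => S _; ring.
Qed.


Lemma sum_only (F : {set 'I_N} -> R) S0 :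
  (forall S, S != S0 -> F S = 0) -> \sum_S F S = F S0.
Proof. by move=> h; rewrite (bigD1 S0) //= big1 ?addr0. Qed.

Lemma decomp (k : nat) : forall (x0 : R) (x : 'I_N -> R),
  (#|[set i | (0 < x i)%R]| <= k)%N -> 0 <= x0 -> (forall i, 0 <= x i <= x0) ->
  exists w, (forall S, 0 <= w S) /\ X0s w = x0 /\ (forall i, Xs w i = x i)
            /\ (forall i j, Ys w i j = Num.min (x i) (x j)).
Proof.
have base : forall (x0 : R) (x : 'I_N -> R), 0 <= x0 -> (forall i, x i = 0) ->
  exists w, (forall S, 0 <= w S) /\ X0s w = x0 /\ (forall i, Xs w i = x i)
            /\ (forall i j, Ys w i j = Num.min (x i) (x j)).
  move=> x0 x hx0 hx; exists (fun S => (S == set0)%:R * x0); split.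
    by move=> S; apply: mulr_ge0 => //; apply: ler0n.
  split; first by rewrite /X0s (sum_only (S0 := set0)) ?eqxx ?mul1r // => S /negbTE ->; rewrite mul0r.
  split.
    by move=> i; rewrite /Xs (sum_only (S0 := set0)) ?inE ?mul0r ?hx // => S /negbTE ->; rewrite mul0r mulr0.
  move=> i j; rewrite /Ys (sum_only (S0 := set0)) ?inE ?mul0r ?hx ?minxx // => S /negbTE ->.
  by rewrite mul0r mulr0.
elim: k => [|k IH] x0 x hk hx0 hx.
  apply: base => // i; have := hx i; case/andP => hi _.
  apply/eqP; rewrite eq_le hi andbT; rewrite leNgt; apply/negP => hlt.
  move: hk; rewrite leqn0 cards_eq0 => /eqP/setP/(_ i); rewrite !inE hlt //.
set P := [set i | 0 < x i].
have [P0|PN0] := eqVneq P set0.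
  apply: base => // i; have := hx i; case/andP => hi _.
  apply/eqP; rewrite eq_le hi andbT; rewrite leNgt; apply/negP => hlt.
  by move/setP: P0 => /(_ i); rewrite !inE hlt.
have [j0 Pj0] := set0Pn _ PN0.
have [i0 Pi0 hmin] : exists2 i0, i0 \in P & forall j, j \in P -> x i0 <= x j.
  by case: (@arg_minP _ R _ j0 (mem P) x Pj0) => i Pi h; exists i.
have hd : 0 < x i0 by move: Pi0; rewrite inE.
set d := x i0 in hd hmin.
have dx0 : d <= x0 by case/andP: (hx i0).
have xP0 : forall i, i \notin P -> x i = 0.
  move=> i; rewrite inE -leNgt => h; apply/eqP; rewrite eq_le h.
  by case/andP: (hx i).
pose x' i := if i \in P then x i - d else 0.
have hk' : (#|[set i | (0 < x' i)%R]| <= k)%N.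
  have sub : [set i | (0 < x' i)%R] \subset P :\ i0.
    apply/subsetP => i; rewrite !inE /x'; case: (i \in P); last by rewrite ltxx.
    rewrite subr_gt0 => h; rewrite (lt_trans hd h) andbT.
    by apply/eqP => ii0; move: h; rewrite ii0 ltxx.
  apply: leq_trans (subset_leq_card sub) _.
  have := cardsD1 i0 P; rewrite Pi0 add1n => hc.
  by move: hk; rewrite hc ltnS.
have hx' : forall i, 0 <= x' i <= x0 - d.
  move=> i; rewrite /x'; case: ifP => iP.
    by rewrite subr_ge0 hmin //= lerD2r; case/andP: (hx i).
  by rewrite lexx subr_ge0.
have hx0' : 0 <= x0 - d by rewrite subr_ge0.
have [w' [hw1 [hw2 [hw3 hw4]]]] := IH (x0 - d) x' hk' hx0' hx'.
exists (fun S => w' S + (S == P)%:R * d); split.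
  by move=> S; apply: addr_ge0 => //; apply: mulr_ge0 => //; apply: ltW.
split.
  rewrite /X0s big_split /= -/(X0s w') hw2 (sum_only (S0 := P)) ?eqxx ?mul1r.
    by rewrite subrK.
  by move=> S /negbTE ->; rewrite mul0r.
split.
  move=> i; rewrite /Xs.
  under eq_bigr => S _ do rewrite mulrDr.
  rewrite big_split /= -/(Xs w' i) hw3 (sum_only (S0 := P)) ?eqxx ?mul1r.
    rewrite /x'; case: ifP => iP; first by rewrite mul1r subrK.
    by rewrite mul0r addr0 xP0 // iP.
  by move=> S /negbTE ->; rewrite mul0r mulr0.
move=> i j; rewrite /Ys.
under eq_bigr => S _ do rewrite mulrDr.
rewrite big_split /= -/(Ys w' i j) hw4 (sum_only (S0 := P)) ?eqxx ?mul1r; last first.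
  by move=> S /negbTE ->; rewrite mul0r mulr0.
rewrite /x'; case: (boolP (i \in P)) => iP; case: (boolP (j \in P)) => jP;
  rewrite ?mul1r ?mul0r ?addr0.
- by rewrite -addr_minl !subrK.
- rewrite (xP0 j) // !min_r //; first by case/andP: (hx i).
  by rewrite subr_ge0 hmin.
- rewrite (xP0 i) // !min_l //; first by case/andP: (hx j).
  by rewrite subr_ge0 hmin.
- by rewrite (xP0 i) // (xP0 j).
Qed.

End Bridge.

Lemma minle_l (R : realDomainType) (x y : R) : Num.min x y <= x.
Proof. by rewrite ge_min lexx. Qed.
Lemma minle_r (R : realDomainType) (x y : R) : Num.min x y <= y.
Proof. by rewrite ge_min lexx orbT. Qed.

Section Helpers.
Variable R : realFieldType.
Lemma sum_only_g (T : finType) (F : T -> R) t0 :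
  (forall t, t != t0 -> F t = 0) -> \sum_t F t = F t0.
Proof. by move=> h; rewrite (bigD1 t0) //= big1 ?addr0. Qed.
Lemma sum_0 (T : finType) : \sum_(i : T) (0 : R) = 0.
Proof. exact: big1_eq. Qed.
Lemma sum_mul0l (T : finType) (F : T -> R) : \sum_i 0 * F i = 0.
Proof. by apply: big1 => i _; rewrite mul0r. Qed.
Lemma sum_mul0r (T : finType) (F : T -> R) : \sum_i F i * 0 = 0.
Proof. by apply: big1 => i _; rewrite mulr0. Qed.
Lemma sum2_mul0l (T U : finType) (F : T -> U -> R) : \sum_i \sum_j 0 * F i j = 0.
Proof. by apply: big1 => i _; rewrite sum_mul0l. Qed.
Lemma sum2_mul0r (T U : finType) (F : T -> U -> R) : \sum_i \sum_j F i j * 0 = 0.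
Proof. by apply: big1 => i _; rewrite sum_mul0r. Qed.
Lemma sum_indl (T : finType) (F : T -> R) i0 : \sum_i (i == i0)%:R * F i = F i0.
Proof.
by rewrite (sum_only_g (t0 := i0)) ?eqxx ?mul1r // => i /negbTE ->; rewrite mul0r.
Qed.
Lemma sum_indlN (T : finType) (F : T -> R) i0 : \sum_i - (i == i0)%:R * F i = - F i0.
Proof. by rewrite -(sum_indl F i0) -sumrN; apply: eq_bigr => i _; rewrite mulNr. Qed.
Lemma sum_indr (T : finType) (F : T -> R) i0 : \sum_i F i * (i0 == i)%:R = F i0.
Proof.
rewrite -(sum_indl F i0); apply: eq_bigr => i _; rewrite mulrC eq_sym //.
Qed.
Lemma sum_indrN (T : finType) (F : T -> R) i0 : \sum_i F i * - (i0 == i)%:R = - F i0.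
Proof. by rewrite -(sum_indr F i0) -sumrN; apply: eq_bigr => i _; rewrite mulrN. Qed.
Lemma sum2_ind1 (T U : finType) (G : T -> U -> R) i0 :
  \sum_i \sum_j (i == i0)%:R * G i j = \sum_j G i0 j.
Proof.
rewrite -(sum_indl (fun i => \sum_j G i j) i0); apply: eq_bigr => i _.
by rewrite mulr_sumr.
Qed.
Lemma sum2_ind2 (T U : finType) (G : T -> U -> R) j0 :
  \sum_i \sum_j (j == j0)%:R * G i j = \sum_i G i j0.
Proof. by apply: eq_bigr => i _; rewrite sum_indl. Qed.
Lemma sum2_indlN (T U : finType) (G : T -> U -> R) i0 j0 :
  \sum_i \sum_j - ((i == i0)%:R * (j == j0)%:R) * G i j = - G i0 j0.
Proof.
rewrite -(sum_indlN (fun i => G i j0) i0); apply: eq_bigr => i _.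
rewrite -(sum_indl (fun j => - (i == i0)%:R * G i j) j0); apply: eq_bigr => j _.
by rewrite mulNr mulNr mulrN; congr (- _); ring.
Qed.
Lemma sum2_indrN (T U : finType) (G : T -> U -> R) i0 j0 :
  \sum_i \sum_j G i j * - ((i0 == i)%:R * (j0 == j)%:R) = - G i0 j0.
Proof.
rewrite -(sum2_indlN G i0 j0); apply: eq_bigr => i _; apply: eq_bigr => j _.
by rewrite mulrC (eq_sym i0) (eq_sym j0).
Qed.
Lemma sum_pair (T U : finType) (F : T * U -> R) : \sum_p F p = \sum_i \sum_j F (i, j).
Proof. by rewrite pair_bigA; apply: eq_bigr => -[i j]. Qed.
End Helpers.

Section Main.
Variables (R : rcfType) (N K : nat) (vh r : 'I_N -> R) (a : 'I_N -> 'I_K -> R)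
  (cap : 'I_K -> R) (om : R) (eps : 'I_N -> R).
Hypotheses (hvh : forall i, 0 < vh i) (hr : forall i, 0 <= r i <= 1)
  (ha : forall i k, 0 <= a i k <= 1) (hcap : forall k, 0 < cap k)
  (hom : 0 <= om < 1) (heps : forall i, 0 <= eps i).

Local Notation oc := (ucb_obj_coef vh r eps).
Local Notation rc := (ucb_res_coef vh eps a).
Local Notation SN := {set 'I_N}.

Lemma ucb_obj_E y : ucb_obj vh r eps y = \sum_(S : SN) oc S * y S.
Proof. by apply: eq_bigr => S _; rewrite /ucb_obj_coef mulr_suml. Qed.

Lemma ucb_res_E k y :
  \sum_(S : SN) \sum_(i in S) a i k * (vh i / (1 + Vsum vh S) - eps i) * y S
  = \sum_(S : SN) rc k S * y S.
Proof. by apply: eq_bigr => S _; rewrite /ucb_res_coef mulr_suml. Qed.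

Definition AU (cn : ('I_K + (bool + SN))%type) (S : SN) : R :=
  match cn with
  | inl k => rc k S
  | inr (inl true) => 1
  | inr (inl false) => -1
  | inr (inr S') => - (S == S')%:R end.
Definition BU (cn : ('I_K + (bool + SN))%type) : R :=
  match cn with
  | inl k => (1 - om) * cap k
  | inr (inl true) => 1
  | inr (inl false) => -1
  | inr (inr _) => 0 end.

Lemma feasU y : feas AU BU y <-> ucb_feasible vh eps a cap om y.
Proof.
have hS : forall S' : SN, \sum_(S : SN) AU (inr (inr S')) S * y S = - y S'.
  move=> S'; rewrite (sum_only (S0 := S')) /= ?eqxx ?mulN1r // => S /negbTE ->.
  by rewrite oppr0 mul0r.
have h1 : \sum_(S : SN) AU (inr (inl false)) S * y S = - \sum_(S : SN) y S.
  by rewrite -sumrN; apply: eq_bigr => S _; rewrite mulN1r.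
have h2 : \sum_(S : SN) AU (inr (inl true)) S * y S = \sum_(S : SN) y S.
  by apply: eq_bigr => S _; rewrite mul1r.
split.
  move=> h; split; first by move=> k; rewrite ucb_res_E; apply: (h (inl k)).
  split.
    apply/eqP; rewrite eq_le; have := h (inr (inl true)); have := h (inr (inl false)).
    by rewrite h1 h2 /= lerN2 => -> ->.
  by move=> S; have := h (inr (inr S)); rewrite hS /= oppr_le0.
case=> hk [hsum hpos] [k|[[|]|S]].
- by have := hk k; rewrite ucb_res_E.
- by rewrite h2 hsum.
- by rewrite h1 hsum.
- by rewrite hS /= oppr_le0.
Qed.

Lemma ucb_feasible0 : ucb_feasible vh eps a cap om (fun S => (S == set0)%:R).
Proof.
split.
  move=> k; rewrite ucb_res_E (sum_only (S0 := set0)); last first.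
    by move=> S /negbTE ->; rewrite mulr0.
  rewrite /ucb_res_coef big_set0 mul0r; apply: mulr_ge0; last exact: ltW.
  by case/andP: hom => _ h; rewrite subr_ge0 ltW.
split; last by move=> S; apply: ler0n.
by rewrite (sum_only (S0 := set0)) ?eqxx // => S /negbTE ->.
Qed.


Lemma res_bridge k (w y : SN -> R) (hy : forall S, y S = w S * (1 + Vsum vh S)) :
  \sum_(S : SN) \sum_(i in S) a i k * (vh i / (1 + Vsum vh S) - eps i) * y S
  = \sum_i a i k * ((vh i - eps i) * Xs w i - eps i * \sum_j vh j * Ys w i j).
Proof.
rewrite (bridge hvh (fun i => a i k) (fun i => - eps i) hy).
by apply: eq_bigr => i _; rewrite mulNr.
Qed.

Lemma obj_bridge (w y : SN -> R) (hy : forall S, y S = w S * (1 + Vsum vh S)) :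
  ucb_obj vh r eps y = cmp_obj vh r eps (X0s w) (Xs w) (Ys w).
Proof. exact: (bridge hvh r eps hy). Qed.

Lemma Xs_ge0 (w : SN -> R) : (forall S, 0 <= w S) -> forall i, 0 <= Xs w i.
Proof. by move=> hw i; apply: sumr_ge0 => S _; apply: mulr_ge0. Qed.

Lemma Ys_ge0 (w : SN -> R) : (forall S, 0 <= w S) -> forall i j, 0 <= Ys w i j.
Proof. by move=> hw i j; apply: sumr_ge0 => S _; rewrite !mulr_ge0. Qed.

Lemma ind_le (b : bool) (z : R) : 0 <= z -> b%:R * z <= z.
Proof. by case: b; rewrite ?mul1r ?mul0r. Qed.

Lemma Xs_le (w : SN -> R) : (forall S, 0 <= w S) -> forall i, Xs w i <= X0s w.
Proof. by move=> hw i; apply: ler_sum => S _; apply: ind_le. Qed.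

Lemma Ys_le (w : SN -> R) : (forall S, 0 <= w S) -> forall i j, Ys w i j <= Num.min (Xs w i) (Xs w j).
Proof.
move=> hw i j; rewrite le_min; apply/andP; split; apply: ler_sum => S _.
  by case: (i \in S); case: (j \in S); rewrite ?mul1r ?mul0r ?lexx.
by case: (i \in S); case: (j \in S); rewrite ?mul1r ?mul0r ?lexx.
Qed.

Lemma cmp_of_ucb y : ucb_feasible vh eps a cap om y ->
  exists x0 x Y, cmp_feasible vh eps a cap om x0 x Y /\ cmp_obj vh r eps x0 x Y = ucb_obj vh r eps y.
Proof.
case=> hk [hsum hpos].
pose w S := y S / (1 + Vsum vh S).
have hy : forall S, y S = w S * (1 + Vsum vh S) by move=> S; rewrite /w divfK // V1_neq0.
have hw : forall S, 0 <= w S by move=> S; rewrite /w divr_ge0 // ltW // V1_gt0.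
exists (X0s w), (Xs w), (Ys w); split; last by rewrite (obj_bridge hy).
split; first exact: Xs_ge0.
split; first exact: Ys_ge0.
split; first by move=> k; rewrite -(res_bridge k hy).
split; first by rewrite -(sum_y hy).
by split; [exact: Xs_le | exact: Ys_le].
Qed.

Lemma x0_ge0 x0 (x : 'I_N -> R) : x0 + \sum_i vh i * x i = 1 -> (forall i, 0 <= x i) ->
  (forall i, x i <= x0) -> 0 <= x0.
Proof.
move=> hs hx hle; case: (pickP (fun _ : 'I_N => true)) => [i0 _|h0].
  exact: le_trans (hle i0).
move: hs; rewrite big_pred0 // addr0 => ->; exact: ler01.
Qed.

Lemma ucb_of_cmp x0 x Y : cmp_feasible vh eps a cap om x0 x Y ->
  exists y, ucb_feasible vh eps a cap om y /\ cmp_obj vh r eps x0 x Y <= ucb_obj vh r eps y.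
Proof.
case=> hx [hY [hk [hs [hle hmin]]]].
have hx0 := x0_ge0 hs hx hle.
have hxx : forall i, 0 <= x i <= x0 by move=> i; rewrite hx hle.
have [w [hw [hw0 [hwx hwy]]]] := decomp (leqnn _) hx0 hxx.
pose y S := w S * (1 + Vsum vh S).
have hy : forall S, y S = w S * (1 + Vsum vh S) by [].
exists y; split.
  split.
    move=> k; rewrite (res_bridge k hy); apply: le_trans (hk k); apply: ler_sum => i _.
    apply: ler_wpM2l; first by case/andP: (ha i k).
    rewrite hwx lerD2l lerN2; apply: ler_wpM2l => //; apply: ler_sum => j _.
    by rewrite hwy; apply: ler_wpM2l; [apply: ltW | apply: hmin].
  split; first by rewrite (sum_y hy) hw0 -hs; congr (_ + _); apply: eq_bigr => i _; rewrite hwx.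
  by move=> S; rewrite /y mulr_ge0 // ltW // V1_gt0.
rewrite (obj_bridge hy) hw0; apply: ler_sum => i _.
apply: ler_wpM2l; first by case/andP: (hr i).
rewrite hwx lerD2l; apply: ler_wpM2l => //; apply: ler_sum => j _.
by rewrite hwy; apply: ler_wpM2l; [apply: ltW | apply: hmin].
Qed.

Lemma part1 : exists v, ucb_opt_value vh r eps a cap om v /\ cmp_opt_value vh r eps a cap om v.
Proof.
have hfe : exists y, feas AU BU y by exists (fun S => (S == set0)%:R); apply/feasU; exact: ucb_feasible0.
have hbd : exists M, forall y, feas AU BU y -> obj oc y <= M.
  exists (\sum_(S : SN) `|oc S|) => y /feasU [_ [hsum hpos]].
  rewrite /obj; apply: le_trans (_ : \sum_(S : SN) (\sum_(S' : SN) `|oc S'|) * y S <= _).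
    apply: ler_sum => S _; apply: ler_wpM2r => //.
    apply: le_trans (ler_norm _) _; rewrite (bigD1 S) //= lerDl.
    by apply: sumr_ge0 => *; apply: normr_ge0.
  by rewrite -mulr_sumr hsum mulr1.
have [ys [hys hmax]] := lp_attain hfe hbd.
move/feasU: hys => hys.
exists (ucb_obj vh r eps ys); split.
  split; first by exists ys.
  move=> y /feasU hy; rewrite !ucb_obj_E; exact: hmax.
split.
  have [x0 [x [Y [hf ho]]]] := cmp_of_ucb hys.
  by exists x0, x, Y.
move=> x0 x Y /ucb_of_cmp [y [hy hle]]; apply: le_trans hle _.
rewrite !ucb_obj_E; apply: hmax; exact/feasU.
Qed.


Section Dual.
Variables (lam : 'I_K -> R) (mu : R).

Definition resk (x : 'I_N -> R) (Y : 'I_N -> 'I_N -> R) k :=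
  \sum_i a i k * ((vh i - eps i) * x i - eps i * \sum_j vh j * Y i j).
Definition La i := \sum_k lam k * (a i k * (vh i - eps i)).
Definition Lb i j := \sum_k lam k * (a i k * (eps i * vh j)).

Lemma RES_E x Y : \sum_k lam k * resk x Y k = \sum_i (La i * x i - \sum_j Lb i j * Y i j).
Proof.
have E : forall k i, lam k * (a i k * ((vh i - eps i) * x i - eps i * \sum_j vh j * Y i j)) =
   lam k * (a i k * (vh i - eps i)) * x i - \sum_j lam k * (a i k * (eps i * vh j)) * Y i j.
  move=> k i.
  have -> : \sum_j lam k * (a i k * (eps i * vh j)) * Y i j =
            lam k * (a i k * (eps i * \sum_j vh j * Y i j)).
    by rewrite !mulr_sumr; apply: eq_bigr => j _; ring.
  ring.
rewrite /resk.
under eq_bigr => k _ do rewrite mulr_sumr.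
under eq_bigr => k _ do under eq_bigr => i _ do rewrite E.
rewrite exchange_big /=; apply: eq_bigr => i _.
rewrite sumrB /La /Lb mulr_suml; congr (_ - _).
rewrite exchange_big /=; apply: eq_bigr => j _; by rewrite mulr_suml.
Qed.

Lemma OBJ_E x0 x Y : cmp_obj vh r eps x0 x Y =
  \sum_i (r i * (vh i + eps i) * x i + \sum_j r i * (eps i * vh j) * Y i j).
Proof.
apply: eq_bigr => i _; rewrite mulrDr mulrA; congr (_ + _).
by rewrite !mulr_sumr; apply: eq_bigr => j _; ring.
Qed.

Lemma weak_cmp al be ga x0 x Y : cmp_dual_feasible vh r eps a lam mu al be ga ->
  (forall i, 0 <= x i) -> (forall i j, 0 <= Y i j) -> (forall i, x i <= x0) ->
  (forall i j, Y i j <= x i) -> (forall i j, Y i j <= x j) ->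
  cmp_obj vh r eps x0 x Y <= \sum_k lam k * resk x Y k + mu * (x0 + \sum_i vh i * x i).
Proof.
case=> hlam [hal [hbe [hga [hmu [hD hE]]]]] hx hY hx0 hYi hYj.
rewrite OBJ_E RES_E.
pose D i := La i + mu * vh i + al i - \sum_j be i j - \sum_j ga j i.
pose E i j := - Lb i j + be i j + ga i j.
apply: le_trans (_ : \sum_i (D i * x i + \sum_j E i j * Y i j) <= _).
  apply: ler_sum => i _; apply: lerD.
    by apply: ler_wpM2r => //; apply: hD.
  by apply: ler_sum => j _; apply: ler_wpM2r => //; apply: hE.
have per : forall i, D i * x i + \sum_j E i j * Y i j =
   (La i * x i - \sum_j Lb i j * Y i j) + mu * (vh i * x i) + al i * x i
   - \sum_j be i j * (x i - Y i j) - \sum_j ga j i * x i + \sum_j ga i j * Y i j.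
  move=> i.
  have e1 : \sum_j E i j * Y i j = - \sum_j Lb i j * Y i j + \sum_j be i j * Y i j
                                   + \sum_j ga i j * Y i j.
    rewrite -sumrN -!big_split; apply: eq_bigr => j _; rewrite /E /=; ring.
  have e2 : \sum_j be i j * (x i - Y i j) = (\sum_j be i j) * x i - \sum_j be i j * Y i j.
    by rewrite mulr_suml -sumrB; apply: eq_bigr => j _; ring.
  have e3 : \sum_j ga j i * x i = (\sum_j ga j i) * x i by rewrite mulr_suml.
  rewrite e1 e2 e3 /D; ring.
under eq_bigr => i _ do rewrite per.
rewrite !(big_split, sumrB) /=.
have g1 : \sum_i \sum_j ga j i * x i = \sum_i \sum_j ga i j * x j by rewrite exchange_big.
have g2 : \sum_i \sum_j ga i j * Y i j <= \sum_i \sum_j ga i j * x j.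
  by apply: ler_sum => i _; apply: ler_sum => j _; apply: ler_wpM2l.
have g3 : 0 <= \sum_i \sum_j be i j * (x i - Y i j).
  by apply: sumr_ge0 => i _; apply: sumr_ge0 => j _; rewrite mulr_ge0 // subr_ge0.
have g4 : \sum_i al i * x i <= mu * x0.
  have -> : mu = \sum_i al i by apply/eqP; rewrite -subr_eq0 hmu.
  by rewrite mulr_suml; apply: ler_sum => i _; apply: ler_wpM2l.
have g5 : \sum_i mu * (vh i * x i) = mu * \sum_i vh i * x i by rewrite mulr_sumr.
rewrite !sumrN g1 g5; lra.
Qed.

Lemma dualW al be ga : cmp_dual_feasible vh r eps a lam mu al be ga ->
  ucb_dual_feasible vh r eps a lam mu.
Proof.
move=> hf; split; first by case: hf.
move=> S.
pose w (S' : SN) := (S' == S)%:R / (1 + Vsum vh S).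
pose y (S' : SN) : R := (S' == S)%:R.
have hy : forall S', y S' = w S' * (1 + Vsum vh S').
  move=> S'; rewrite /y /w; case: eqP => [->|_]; last by rewrite !mul0r.
  by rewrite divfK // V1_neq0.
have hw : forall S', 0 <= w S' by move=> S'; rewrite /w divr_ge0 // ltW // V1_gt0.
have := weak_cmp hf (Xs_ge0 hw) (Ys_ge0 hw) (Xs_le hw)
  (fun i j => le_trans (Ys_le hw i j) (minle_l _ _))
  (fun i j => le_trans (Ys_le hw i j) (minle_r _ _)).
rewrite -(obj_bridge hy) -(sum_y hy) ucb_obj_E.
have sy : forall F : SN -> R, \sum_(S' : SN) F S' * y S' = F S.
  move=> F; rewrite (sum_only (S0 := S)) /y ?eqxx ?mulr1 // => S' /negbTE ->.
  by rewrite mulr0.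
have -> : \sum_(S' : SN) y S' = 1 by rewrite -(sy (fun _ => 1)); apply: eq_bigr => *; rewrite mul1r.
rewrite sy mulr1.
have -> : \sum_k lam k * resk (Xs w) (Ys w) k = \sum_k lam k * rc k S.
  by apply: eq_bigr => k _; rewrite /resk -(res_bridge k hy) ucb_res_E sy.
by [].
Qed.

Local Notation TV := ('I_N + ('I_N * 'I_N + 'I_N * 'I_N))%type.
Local Notation CC := (bool + ('I_N + 'I_N * 'I_N))%type.

Lemma sumTV (F : TV -> R) : \sum_t F t = \sum_i F (inl i) +
  (\sum_i \sum_j F (inr (inl (i, j))) + \sum_i \sum_j F (inr (inr (i, j)))).
Proof. by rewrite !big_sumType /= !sum_pair. Qed.

Lemma sumCC (F : CC -> R) : \sum_c F c = F (inl true) + F (inl false) +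
  (\sum_i F (inr (inl i)) + \sum_i \sum_j F (inr (inr (i, j)))).
Proof. by rewrite !big_sumType /= big_bool /= !sum_pair. Qed.

Definition AD (c : CC) (t : TV) : R :=
  match c, t with
  | inl true, inl _ => 1
  | inl false, inl _ => -1
  | inr (inl i), inl i' => - (i' == i)%:R
  | inr (inl i), inr (inl p) => (p.1 == i)%:R
  | inr (inl i), inr (inr p) => (p.2 == i)%:R
  | inr (inr p), inr (inl p') => - ((p'.1 == p.1)%:R * (p'.2 == p.2)%:R)
  | inr (inr p), inr (inr p') => - ((p'.1 == p.1)%:R * (p'.2 == p.2)%:R)
  | _, _ => 0 end.

Definition BD (c : CC) : R :=
  match c with
  | inl true => mu | inl false => - mu
  | inr (inl i) => La i + mu * vh i - r i * (vh i + eps i)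
  | inr (inr p) => - Lb p.1 p.2 - r p.1 * (eps p.1 * vh p.2) end.

Lemma AD_feas (x : TV -> R) : (forall t, 0 <= x t) ->
  (forall c, \sum_t AD c t * x t <= BD c) -> (forall k, 0 <= lam k) ->
  cmp_dual_feasible vh r eps a lam mu (fun i => x (inl i))
    (fun i j => x (inr (inl (i, j)))) (fun i j => x (inr (inr (i, j)))).
Proof.
move=> hx hc hlam.
have h1 := hc (inl true); have h2 := hc (inl false).
rewrite sumTV /= !sum2_mul0l !addr0 in h1.
rewrite sumTV /= !sum2_mul0l !addr0 in h2.
split => //; split => //; split => //; split => //.
split.
  have e1 : \sum_i 1 * x (inl i) = \sum_i x (inl i) by apply: eq_bigr => i _; rewrite mul1r.
  have e2 : \sum_i (-1) * x (inl i) = - \sum_i x (inl i).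
    by rewrite -sumrN; apply: eq_bigr => i _; rewrite mulN1r.
  rewrite e1 in h1; rewrite e2 in h2; apply/eqP; rewrite subr_eq0 eq_le.
  by apply/andP; split; lra.
split.
  move=> i; have := hc (inr (inl i)); rewrite sumTV /=.
  rewrite sum_indlN sum2_ind1 sum2_ind2 /La => h; lra.
move=> i j; have := hc (inr (inr (i, j))); rewrite sumTV /=.
rewrite sum_mul0l !sum2_indlN /Lb => h; lra.
Qed.

Lemma AD_cert (l : CC -> R) : (forall c, 0 <= l c) ->
  (forall t, 0 <= \sum_c l c * AD c t) -> \sum_c l c * BD c < 0 ->
  exists x0 (X : 'I_N -> R) (Y : 'I_N -> 'I_N -> R),
  [/\ (forall i, 0 <= X i), (forall i j, 0 <= Y i j), (forall i, X i <= x0),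
      (forall i j, Y i j <= Num.min (X i) (X j)) &
      mu * (x0 + \sum_i vh i * X i) + \sum_k lam k * resk X Y k - cmp_obj vh r eps x0 X Y < 0].
Proof.
move=> hl hcol hB.
pose X i := l (inr (inl i)); pose Y i j := l (inr (inr (i, j))).
exists (l (inl true) - l (inl false)), X, Y; split.
- by move=> i; apply: hl.
- by move=> i j; apply: hl.
- move=> i; have := hcol (inl i); rewrite sumCC /= sum_indrN sum2_mul0r addr0.
  rewrite /X; lra.
- move=> i j; rewrite le_min; apply/andP; split.
    have := hcol (inr (inl (i, j))); rewrite sumCC /= sum_indr sum2_indrN !mulr0 !add0r.
    rewrite /X /Y; lra.
  have := hcol (inr (inr (i, j))); rewrite sumCC /= sum_indr sum2_indrN !mulr0 !add0r.
  rewrite /X /Y; lra.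
move: hB; rewrite sumCC /= RES_E OBJ_E.
have per : forall i, X i * (La i + mu * vh i - r i * (vh i + eps i)) +
    \sum_j Y i j * (- Lb i j - r i * (eps i * vh j)) =
    (La i * X i - \sum_j Lb i j * Y i j) + mu * (vh i * X i) -
    (r i * (vh i + eps i) * X i + \sum_j r i * (eps i * vh j) * Y i j).
  move=> i.
  have -> : \sum_j Y i j * (- Lb i j - r i * (eps i * vh j)) =
     - \sum_j Lb i j * Y i j - \sum_j r i * (eps i * vh j) * Y i j.
    by rewrite -sumrN -sumrB; apply: eq_bigr => j _; ring.
  ring.
have -> : \sum_i X i * (La i + mu * vh i - r i * (vh i + eps i)) +
   \sum_i \sum_j Y i j * (- Lb i j - r i * (eps i * vh j)) =
   \sum_i ((La i * X i - \sum_j Lb i j * Y i j) + mu * (vh i * X i) -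
    (r i * (vh i + eps i) * X i + \sum_j r i * (eps i * vh j) * Y i j)).
  by rewrite -big_split /=; apply: eq_bigr => i _; exact: per.
rewrite sumrB big_split /= -mulr_sumr.
set P := \sum_i (La i * X i - _); set Q := \sum_i (_ + _).
lra.
Qed.

Lemma obj_mono x0 x (Y Y' : 'I_N -> 'I_N -> R) : (forall i j, Y i j <= Y' i j) ->
  cmp_obj vh r eps x0 x Y <= cmp_obj vh r eps x0 x Y'.
Proof.
move=> hY; apply: ler_sum => i _; apply: ler_wpM2l; first by case/andP: (hr i).
rewrite lerD2l; apply: ler_wpM2l => //; apply: ler_sum => j _.
by apply: ler_wpM2l => //; apply: ltW.
Qed.

Lemma res_mono x (Y Y' : 'I_N -> 'I_N -> R) k : (forall i j, Y i j <= Y' i j) ->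
  resk x Y' k <= resk x Y k.
Proof.
move=> hY; apply: ler_sum => i _; apply: ler_wpM2l; first by case/andP: (ha i k).
rewrite lerD2l lerN2; apply: ler_wpM2l => //; apply: ler_sum => j _.
by apply: ler_wpM2l => //; apply: ltW.
Qed.

Lemma cmp_obj_ext x0 x x' (Y Y' : 'I_N -> 'I_N -> R) : (forall i, x i = x' i) ->
  (forall i j, Y i j = Y' i j) -> cmp_obj vh r eps x0 x Y = cmp_obj vh r eps x0 x' Y'.
Proof.
move=> hx hY; apply: eq_bigr => i _; rewrite hx; congr (_ * (_ + _ * _)).
by apply: eq_bigr => j _; rewrite hY.
Qed.

Lemma resk_ext x x' (Y Y' : 'I_N -> 'I_N -> R) k : (forall i, x i = x' i) ->
  (forall i j, Y i j = Y' i j) -> resk x Y k = resk x' Y' k.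
Proof.
move=> hx hY; apply: eq_bigr => i _; rewrite hx; congr (_ * (_ - _ * _)).
by apply: eq_bigr => j _; rewrite hY.
Qed.

Lemma ucb_weak y : ucb_dual_feasible vh r eps a lam mu -> (forall S, 0 <= y S) ->
  ucb_obj vh r eps y <= \sum_k lam k * (\sum_(S : SN) rc k S * y S) + mu * \sum_(S : SN) y S.
Proof.
case=> _ hS hy; rewrite ucb_obj_E.
apply: le_trans (_ : \sum_(S : SN) (\sum_k lam k * rc k S + mu) * y S <= _).
  by apply: ler_sum => S _; apply: ler_wpM2r => //; apply: hS.
under eq_bigr => S _ do rewrite mulrDl.
rewrite big_split /= -mulr_sumr; apply: lerD => //.
under eq_bigr => S _ do rewrite mulr_suml.
rewrite exchange_big /=; apply: ler_sum => k _; rewrite mulr_sumr.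
by apply: ler_sum => S _; rewrite mulrA.
Qed.

Lemma dualS : ucb_dual_feasible vh r eps a lam mu ->
  exists mu', mu' <= mu /\ exists al be ga, cmp_dual_feasible vh r eps a lam mu' al be ga.
Proof.
move=> hU; have hlam : forall k, 0 <= lam k by case: hU.
case: (pickP (fun _ : 'I_N => true)) => [i0 _|h0]; last first.
  exists 0; split.
    case: hU => _ /(_ set0); rewrite /ucb_obj_coef /ucb_res_coef big_set0.
    by rewrite (eq_bigr (fun _ => 0)) ?sum_0 ?add0r // => k _; rewrite big_set0 mulr0.
  exists (fun _ => 0), (fun _ _ => 0), (fun _ _ => 0).
  split => //; split => //; split => //; split => //; split; first by rewrite sum_0 subrr.
  by split => i; have := h0 i.
exists mu; split => //.
case: (classic (exists x : TV -> R, (forall t, 0 <= x t) /\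
                  forall c, \sum_t AD c t * x t <= BD c)) => [[x [hx hc]]|hno].
  by eexists _, _, _; apply: AD_feas.
have hinf : forall x : TV -> R, (forall t, 0 <= x t) ->
    ~ (forall c, \sum_t AD c t * x t <= BD c).
  by move=> x hx hc; apply: hno; exists x.
have [l [hl [hcol hB]]] := farkas_nn hinf.
have [x0 [X [Y [hX hY hXx0 hYm hineq]]]] := AD_cert hl hcol hB.
exfalso.
have hx0 : 0 <= x0 := le_trans (hX i0) (hXx0 i0).
have hxx : forall i, 0 <= X i <= x0 by move=> i; rewrite hX hXx0.
have [w [hw [hw0 [hwx hwy]]]] := decomp (leqnn _) hx0 hxx.
pose y S := w S * (1 + Vsum vh S).
have hy : forall S, y S = w S * (1 + Vsum vh S) by [].
have hy0 : forall S, 0 <= y S by move=> S; rewrite /y mulr_ge0 // ltW // V1_gt0.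
have := ucb_weak hU hy0.
rewrite (obj_bridge hy) (sum_y hy) hw0.
rewrite (cmp_obj_ext _ hwx hwy).
have -> : \sum_i vh i * Xs w i = \sum_i vh i * X i by apply: eq_bigr => i _; rewrite hwx.
have -> : \sum_k lam k * (\sum_(S : SN) rc k S * y S) =
          \sum_k lam k * resk X (fun i j => Num.min (X i) (X j)) k.
  apply: eq_bigr => k _; rewrite -ucb_res_E (res_bridge k hy); congr (_ * _).
  exact: resk_ext.
have h1 := obj_mono x0 X hYm.
have h2 : \sum_k lam k * resk X (fun i j => Num.min (X i) (X j)) k <=
          \sum_k lam k * resk X Y k.
  by apply: ler_sum => k _; apply: ler_wpM2l => //; apply: res_mono.
move=> h3; lra.
Qed.
End Dual.


Lemma part2 lam : (exists mu, ucb_dual_optimal vh r eps a cap om lam mu) <->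
  (exists mu al be ga, cmp_dual_optimal vh r eps a cap om lam mu al be ga).
Proof.
split.
  case=> mu [hU hopt].
  have [mu' [hle [al [be [ga hC]]]]] := dualS hU.
  have e : mu' = mu.
    apply/eqP; rewrite eq_le hle /=.
    have := hopt _ _ (dualW hC); rewrite /ucb_dual_obj lerD2l //.
  subst mu'; exists mu, al, be, ga; split => // lam2 mu2 al2 be2 ga2 hC2.
  exact: hopt _ _ (dualW hC2).
case=> mu [al [be [ga [hC hopt]]]].
exists mu; split; first exact: dualW hC.
move=> lam2 mu2 hU2; have [mu3 [hle [al3 [be3 [ga3 hC3]]]]] := dualS hU2.
apply: le_trans (hopt _ _ _ _ _ hC3) _.
by rewrite /cmp_dual_obj /ucb_dual_obj lerD2l.
Qed.

End Main.

Unset Implicit Arguments.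
Theorem theorem3 (R : rcfType) (N K : nat)
  (vh r : 'I_N -> R) (a : 'I_N -> 'I_K -> R) (c : 'I_K -> R)
  (om Psi : R) (n : 'I_N -> nat)
  (hvh : forall i, 0 < vh i)
  (hr : forall i, 0 <= r i <= 1)
  (ha : forall i k, 0 <= a i k <= 1)
  (hc : forall k, 0 < c k)
  (hom : 0 <= om < 1)
  (hn : forall i, (0 < n i)%N)
  (hPsi : 0 < Psi) :
  let eps := fun i => eps_of N Psi (n i) in
  (exists v : R, ucb_opt_value vh r eps a c om v /\ cmp_opt_value vh r eps a c om v)
  /\ (forall lam : 'I_K -> R,
        (exists mu, ucb_dual_optimal vh r eps a c om lam mu)
        <-> (exists mu al be ga, cmp_dual_optimal vh r eps a c om lam mu al be ga)).
Proof.
move=> eps.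
have heps : forall i, 0 <= eps i.
  move=> i; rewrite /eps /eps_of; apply: divr_ge0; last exact: sqrtr_ge0.
  apply: mulr_ge0; last exact: ltW.
  by apply: addr_ge0; [exact: sqrtr_ge0 | exact: ler01].
split; first exact: part1.
move=> lam; exact: part2.
Qed.
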